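(* In the MAD-HTLC game starting from its initial subgame (first of the $T$ rounds, with the deposit contract MH-Dep still redeemable), if Alice ($\mathcal{A}$) knows the preimage $\textit{pre}_a$ and $\mathcal{A}$ and Bob ($\mathcal{B}$) both follow the prescribed strategies, then the miners' best-response strategy leads to $\mathcal{A}$ redeeming MH-Dep for $v^{\text{dep}} - f^{\text{dep}}_{\mathcal{A}}$ tokens, and $\mathcal{B}$ redeeming MH-Col for $v^{\text{col}} - f^{\text{col}}_{\mathcal{B}}$ tokens.
   Context: Setting: a blockchain where in each of $T$ rounds $\mathcal{A}$ and $\mathcal{B}$ may publish transactions to a public mempool, then one miner (chosen with probability equal to her mining power) creates a block containing one transaction of her choice and collects its fee; there is always an unrelated mempool transaction paying the base fee $f$. Miners and users are rational, non-myopic, and maximize expected tokens at game end. MAD-HTLC is initiated in some block and consists of two contracts parameterized by hash digests $\textit{dig}_a = H(\textit{pre}_a)$, $\textit{dig}_b = H(\textit{pre}_b)$ (only $\mathcal{B}$ knows $\textit{pre}_b$) and timeout $T$. MH-Dep holds $v^{\text{dep}}$ tokens and is redeemable (i) by $\mathcal{A}$ with $\textit{pre}_a$ and her signature at any time, (ii) by $\mathcal{B}$ with $\textit{pre}_b$ and his signature after $T$ blocks, or (iii) by anyone presenting both $\textit{pre}_a$ and $\textit{pre}_b$. MH-Col holds $v^{\text{col}}$ tokens and is redeemable only after $T$ blocks, either by $\mathcal{B}$ with his signature or by anyone presenting both preimages. Prescribed strategy: if $\mathcal{A}$ knows $\textit{pre}_a$ she publishes, during the first $T-1$ rounds, a transaction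 redeeming MH-Dep via path (i) with fee $f^{\text{dep}}_{\mathcal{A}}$, where $f < f^{\text{dep}}_{\mathcal{A}} < v^{\text{dep}}$; if $\mathcal{A}$ published it, $\mathcal{B}$ publishes in round $T$ a transaction redeeming only MH-Col via his signature path with fee $f^{\text{col}}_{\mathcal{B}}$, where $f < f^{\text{col}}_{\mathcal{B}} < v^{\text{col}}$ (otherwise $\mathcal{B}$ redeems both contracts). The game is analyzed via subgame perfect equilibrium and backward induction. *)

(* Defs.v *)
(* Model of the MAD-HTLC game (rounds 1..T) in which A and B
   follow the prescribed strategies, so that the only strategic players are
   the miners. *)
From mathcomp Require Import all_boot all_order all_algebra.
Set Implicit Arguments. Unset Strict Implicit. Unset Printing Implicit Defensive.
Import Order.TTheory GRing.Theory Num.Theory.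
Local Open Scope ring_scope.

(* What the miner of a round puts in her block:
   Unrel = the unrelated mempool transaction paying the base fee f,
   IncA  = A's transaction redeeming MH-Dep via path (i) (fee fA),
   IncB  = B's transaction redeeming only MH-Col via his signature (fee fB). *)
Inductive choice := Unrel | IncA | IncB.

(* Payoff-relevant state: has MH-Dep been redeemed (by A's tx), has MH-Col
   been redeemed (by B's tx). *)
Record gstate := GState { depR : bool; colR : bool }.
Definition init_state := GState false false.

Definition next_state (s : gstate) (c : choice) : gstate :=
  match c with
  | Unrel => s
  | IncA => GState true (colR s)
  | IncB => GState (depR s) true
  end.

Section Game.
Variables (R : realFieldType) (M : finType) (lam : M -> R).
(* T = timeout / number of rounds; tA = round (in 1..T-1) in which A
   publishes her MH-Dep transaction. *)
Variables (T tA : nat) (f fA fB : R).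

(* A's tx is in
   the mempool from round tA on; B publishes his tx in round T (MH-Col is
   redeemable by B's signature from then on). Pre_b is never revealed under
   the prescribed strategies, so no path-(iii) transaction exists. *)
Definition validc (k : nat) (s : gstate) (c : choice) : bool :=
  match c with
  | Unrel => true
  | IncA => (tA <= k)%N && ~~ depR s
  | IncB => (k == T)%N && ~~ colR s
  end.

Definition eff k s c := if validc k s c then c else Unrel.

Definition fee (c : choice) : R :=
  match c with Unrel => f | IncA => fA | IncB => fB end.

Definition strategy := nat -> gstate -> choice.
Definition profile := M -> strategy.

(* Expected fees collected by miner i over the next n rounds, starting at
   round k in state s, when miners play sig (the round's miner is j with
   probability lam j). *)
Fixpoint value (sig : profile) (i : M) (n k : nat) (s : gstate) : R :=
  match n with
  | 0 => 0
  | n'.+1 =>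
      \sum_(j : M) lam j *
        ((if j == i then fee (eff k s (sig j k s)) else 0)
         + value sig i n' k.+1 (next_state s (eff k s (sig j k s))))
  end.

Definition subgame_value sig i k s := value sig i (T.+1 - k) k s.

Definition deviate (sig : profile) (i : M) (tau : strategy) : profile :=
  fun j => if j == i then tau else sig j.

Definition is_SPE (sig : profile) : Prop :=
  forall (i : M) (tau : strategy) (k : nat) (s : gstate),
    (1 <= k <= T)%N ->
    subgame_value (deviate sig i tau) i k s <= subgame_value sig i k s.

Fixpoint play (sig : profile) (w : nat -> M) (n k : nat) (s : gstate) : gstate :=
  match n with
  | 0 => s
  | n'.+1 => play sig w n' k.+1 (next_state s (eff k s (sig (w k) k s)))
  end.

Definition final_state sig w := play sig w T 1 init_state.
End Game.

(* Tokens obtained by A and B at the end of the game (under the prescribed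
   strategies, their only transactions are the ones above). *)
Definition tokensA (R : realFieldType) (vdep fA : R) (s : gstate) : R :=
  if depR s then vdep - fA else 0.
Definition tokensB (R : realFieldType) (vcol fB : R) (s : gstate) : R :=
  if colR s then vcol - fB else 0.

(* Main.v *)
Require Import Defs.
From mathcomp Require Import all_boot all_order all_algebra.
From mathcomp Require Import zify ring lra.
Import Order.TTheory GRing.Theory Num.Theory.
Local Open Scope ring_scope.

Theorem lemma2 (R : realFieldType) (M : finType) (lam : M -> R)
    (T tA : nat) (f fA fB vdep vcol : R) :
  (forall i : M, 0 < lam i) ->
  \sum_(i : M) lam i = 1 ->
  (0 < tA < T)%N ->
  f < fA < vdep ->
  f < fB < vcol ->
  (exists sig : profile M, is_SPE lam T tA f fA fB sig) /\
  (forall sig : profile M, is_SPE lam T tA f fA fB sig ->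
     forall w : nat -> M,
       tokensA vdep fA (final_state T tA sig w) = vdep - fA /\
       tokensB vcol fB (final_state T tA sig w) = vcol - fB).
Proof.
move=> lam_pos lam1 /andP[tA0 tAT] /andP[ffA fAv] /andP[ffB fBv].
have lam_le1 : forall j, lam j <= 1.
  move=> j; rewrite -lam1 (bigD1 j) //= lerDl; apply: sumr_ge0 => l _.
  exact: ltW.
have sum_split : forall (i : M) (a X : R),
    \sum_(j : M) lam j * ((if j == i then a else 0) + X) = lam i * a + X.
  move=> i a X.
  under eq_bigr => j _ do rewrite mulrDr.
  rewrite big_split /= -big_distrl /= lam1 mul1r.
  rewrite (bigD1 i) //= eqxx big1 ?addr0 // => j /negbTE ->; by rewrite mulr0.
have tAT' : (tA <= T)%N by lia.
split.
  pose sig0 : profile M := fun _ k s => if k == T then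
     (if ~~ colR s && (depR s || (fA < fB)) then IncB else IncA) else IncA.
  have stepE : forall i n k s, value lam T tA f fA fB sig0 i n.+1 k s =
     lam i * fee f fA fB (eff T tA k s (sig0 i k s)) +
     value lam T tA f fA fB sig0 i n k.+1 (next_state s (eff T tA k s (sig0 i k s))).
    move=> i n k s; rewrite /sig0 /=; exact: sum_split.
  have L : forall i k c, (tA <= k <= T)%N ->
      value lam T tA f fA fB sig0 i (T.+1 - k) k (GState false c) <=
      value lam T tA f fA fB sig0 i (T.+1 - k) k (GState true c) + (fA - f).
    move=> i k c /andP[tk kT].
    have -> : (T.+1 - k = (T-k).+1)%N by lia.
    rewrite !stepE /sig0.
    have := lam_le1 i; have := lam_pos i.
    case: (eqVneq k T) => [->|kT'].
      rewrite subnn /= ?eqxx.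
      case: (leP fB fA) => h; case: c; rewrite /eff /validc /= ?tAT' ?eqxx /=; nra.
    rewrite /eff /validc /= tk /=; nra.
  have O : forall i k s c, (k <= T)%N ->
      fee f fA fB (eff T tA k s c) + value lam T tA f fA fB sig0 i (T - k) k.+1
        (next_state s (eff T tA k s c)) <=
      fee f fA fB (eff T tA k s (sig0 i k s)) + value lam T tA f fA fB sig0 i (T - k) k.+1
        (next_state s (eff T tA k s (sig0 i k s))).
    move=> i k [d cc] c kT; rewrite /sig0.
    case: (eqVneq k T) => [->|kT'].
      rewrite subnn /= ?eqxx.
      case: (leP fB fA) => h; case: c; case: d; case: cc;
        rewrite /eff /validc /= ?tAT' ?eqxx /=; lra.
    case: (boolP (tA <= k)%N) => tk.
      case: d.
        by case: c; rewrite /eff /validc /= ?tk ?(negbTE kT') /=.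
      have LL := L i k.+1 cc.
      have e : (T.+1 - k.+1 = T - k)%N by lia.
      rewrite e in LL.
      have := LL ltac:(lia).
      by case: c; rewrite /eff /validc /= ?tk ?(negbTE kT') /=; lra.
    by case: c; rewrite /eff /validc /= ?(negbTE tk) ?(negbTE kT') /=.
  have D : forall i tau n k s, (k + n = T.+1)%N ->
      value lam T tA f fA fB (deviate sig0 i tau) i n k s <=
      value lam T tA f fA fB sig0 i n k s.
    move=> i tau; elim=> [|n IH] k s Hkn /=; first exact: lexx.
    apply: ler_sum => j _; apply: ler_wpM2l; first exact: ltW.
    have -> : deviate sig0 i tau j k s = (if j == i then tau k s else sig0 j k s).
      by rewrite /deviate; case: (j == i).
    case: eqVneq => [->|ji].
      apply: le_trans; first (apply: lerD; [exact: lexx | apply: IH; lia]).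
      have nE : n = (T - k)%N by lia.
      rewrite nE; apply: O; lia.
    apply: lerD; first exact: lexx.
    apply: IH; lia.
  exists sig0 => i tau k s /andP[k1 kT]; rewrite /subgame_value; apply: D; lia.
move=> sig spe w.
have sum_dev_le : forall j (F G : M -> R),
    (forall l, l != j -> F l = G l) ->
    \sum_l lam l * F l <= \sum_l lam l * G l -> F j <= G j.
  move=> j F G FG.
  rewrite (bigD1 j) //= [X in _ <= X](bigD1 j) //=.
  rewrite (eq_bigr (fun l => lam l * G l)) => [|l lj]; last by rewrite FG.
  by rewrite lerD2r ler_pM2l.
have value1 : forall sg i k s, value lam T tA f fA fB sg i 1 k s =
    lam i * fee f fA fB (eff T tA k s (sg i k s)).
  move=> sg i k s /=; rewrite (bigD1 i) //= eqxx big1 => [|l /negbTE ->];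
    by rewrite ?addr0 ?mulr0.
have hT : (1 <= T <= T)%N by rewrite leqnn andbT; lia.
have hB : forall j, sig j T (GState true false) = IncB.
  move=> j; have H := spe j (fun _ _ => IncB) T (GState true false) hT.
  rewrite /subgame_value subSnn !value1 /deviate eqxx in H.
  have := lam_pos j.
  case: (sig j T (GState true false)) H => //; rewrite /eff /validc /= ?eqxx ?andbF /= => H lp;
   exfalso; nra.
have hT1 : (1 <= T.-1 <= T)%N by lia.
have tAT1 : (tA <= T.-1)%N by lia.
have TT1 : (T.-1 == T) = false by lia.
have hA : forall j, sig j T.-1 (GState false false) = IncA.
  move=> j.
  pose tau : strategy := fun k s => if k == T.-1 then IncA else sig j k s.
  have H := spe j tau T.-1 (GState false false) hT1.
  have e2 : (T.+1 - T.-1 = 2)%N by lia.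
  rewrite /subgame_value e2 in H.
  have devT : forall s', value lam T tA f fA fB (deviate sig j tau) j 1 T s' =
      value lam T tA f fA fB sig j 1 T s'.
    by move=> s'; rewrite !value1 /deviate eqxx /tau eq_sym TT1.
  have valueS : forall sg i n k s, value lam T tA f fA fB sg i n.+1 k s =
    \sum_l lam l * ((if l == i then fee f fA fB (eff T tA k s (sg l k s)) else 0) +
      value lam T tA f fA fB sg i n k.+1 (next_state s (eff T tA k s (sg l k s)))).
    by [].
  have eT : T.-1.+1 = T by lia.
  rewrite 2!valueS eT in H.
  move/(sum_dev_le j): H => H.
  have side : forall l, l != j ->
     (if l == j then fee f fA fB (eff T tA T.-1 (GState false false)
        (deviate sig j tau l T.-1 (GState false false))) else 0) +
     value lam T tA f fA fB (deviate sig j tau) j 1 T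
        (next_state (GState false false) (eff T tA T.-1 (GState false false)
          (deviate sig j tau l T.-1 (GState false false)))) =
     (if l == j then fee f fA fB (eff T tA T.-1 (GState false false)
        (sig l T.-1 (GState false false))) else 0) +
     value lam T tA f fA fB sig j 1 T
        (next_state (GState false false) (eff T tA T.-1 (GState false false)
          (sig l T.-1 (GState false false)))).
    move=> l lj.
    have dl : deviate sig j tau l = sig l by rewrite /deviate (negbTE lj).
    by rewrite dl devT.
  have {}H := H side.
  rewrite devT eqxx /deviate eqxx /tau eqxx !value1 in H.
  have l0 := lam_pos j; have l1 := lam_le1 j.
  move: H; case: (sig j T.-1 (GState false false)) => //;
    rewrite /eff /validc /= ?tAT1 ?TT1 ?eqxx ?andbF ?tAT' /= ?hB => H.
  1,2: move: H; case: (sig j T (GState false false)) => /= H; exfalso;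
    case: (leP fB fA) => h; nra.
pose step k s := next_state s (eff T tA k s (sig (w k) k s)).
have playR : forall n k s, play T tA sig w n.+1 k s = step (k + n)%N (play T tA sig w n k s).
  elim=> [|n IH] k s; first by rewrite addn0.
  change (play T tA sig w n.+2 k s) with (play T tA sig w n.+1 k.+1 (step k s)).
  by rewrite IH addSn addnS.
have colstep : forall k s c, k != T -> colR (next_state s (eff T tA k s c)) = colR s.
  move=> k s c kT; case: c; rewrite /eff /validc /= ?(negbTE kT) //=; by case: ifP.
have colplay : forall n k s, (k + n <= T)%N -> colR s = false ->
    colR (play T tA sig w n k s) = false.
  elim=> [|n IH] k s hk cs //=.
  apply: IH; first lia.
  rewrite colstep //; lia.
have playR' : forall n k s m, m = n.+1 ->
    play T tA sig w m k s = step (k + n)%N (play T tA sig w n k s).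
  by move=> n k s m ->; apply: playR.
have e1 : play T tA sig w T 1 init_state = step T (play T tA sig w T.-1 1 init_state).
  rewrite (playR' T.-1 1%N init_state T); last lia.
  congr step; lia.
have e2 : play T tA sig w T.-1 1 init_state =
    step T.-1 (play T tA sig w T.-2 1 init_state).
  rewrite (playR' T.-2 1%N init_state T.-1); last lia.
  congr step; lia.
have c1 := colplay T.-2 1%N init_state ltac:(lia) erefl.
rewrite /final_state e1 e2.
move: c1; case: (play T tA sig w T.-2 1 init_state) => d c /= ->.
have s2 : step T.-1 (GState d false) = GState true false.
  rewrite /step; case: d.
    by case: (sig _ _ _); rewrite /eff /validc /= ?TT1 ?andbF.
  by rewrite hA /eff /validc /= tAT1.
rewrite s2 /step hB /eff /validc /= eqxx /=.
by rewrite /tokensA /tokensB.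
Qed.
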